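(* Let $S$ be a monoid, $I, J$ sets and $P$ a $J\times I$ matrix, and let $M$ be either $M(S; I, J; P)$ (entries of $P$ in $S$) or $M^0(S; I, J; P)$ (entries of $P$ in $S \cup \{0\}$), and suppose $M$ is finitely generated. If some entry of $P$ is a unit of $S$, then there exist finite choices of generators $\sigma$ for $S$ and $\tau$ for $M$ and a regular language $R$ such that $L_\sigma(S) = L_\tau(M) \cap R$.
   Context: The Rees matrix semigroup with zero $M^0(S; I, J; P)$ (where $0 \notin S$) has elements $(I \times S \times J) \cup \{0\}$, $0$ is a zero, and $(i_1, g_1, j_1)(i_2, g_2, j_2) = (i_1, g_1 P_{j_1 i_2} g_2, j_2)$ if $P_{j_1 i_2} \in S$ and $=0$ if $P_{j_1 i_2} = 0$. If $P$ has no zero entries, $M(S;I,J;P)$ is the subsemigroup $I \times S \times J$. A unit of a monoid $S$ with identity $1$ is $g$ with $gh = hg = 1$ for some $h \in S$. For a semigroup $S$, $S^1$ denotes the monoid obtained by adjoining a new identity $1$ (even if $S$ already has one). A choice of generators for $S$ is a surjective morphism $\sigma : X^+ \to S$ from a free semigroup, finite if $X$ is finite; it extends uniquely to $\sigma^1 : X^* \to S^1$. Let $\overline{X} = \{\overline{x} : x \in X\}$ be a set of formal inverses, $\hat{X} = X \cup \overline{X}$. The loop automaton of $S$ with respect to $\sigma$ is the directed labelled graph with vertex set $S^1$, having for each $a \in S^1$ and $x \in X$ an edge from $a$ to $a(x\sigma)$ labelled $x$ and an edge from $a(x\sigma)$ to $a$ labelled $\overline{x}$. The loop problem $L_\sigma(S)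 \subseteq \hat{X}^*$ is the set of words labelling paths from $1$ to $1$ in this graph (including the empty word). *)

(* Defs.v *)
From mathcomp Require Import all_boot.
Set Implicit Arguments. Unset Strict Implicit. Unset Printing Implicit Defensive.

(* A semigroup is a carrier type with a binary operation [mul].
   The value of the free-semigroup morphism sigma : X^+ -> T on the nonempty
   word x0 w (x0 first letter). *)
Definition word_eval {T X : Type} (mul : T -> T -> T) (gen : X -> T)
  (x0 : X) (w : seq X) : T :=
  foldl (fun a x => mul a (gen x)) (gen x0) w.

Definition is_choice_of_generators {T X : Type} (mul : T -> T -> T)
  (gen : X -> T) : Prop :=
  forall t : T, exists (x0 : X) (w : seq X), word_eval mul gen x0 w = t.

Definition fin_generated {T : Type} (mul : T -> T -> T) : Prop :=
  exists (X : finType) (gen : X -> T), is_choice_of_generators mul gen.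

(* S^1 = option T, with None the adjoined identity; right multiplication by
   an element of T. *)
Definition mul1 {T : Type} (mul : T -> T -> T) (a : option T) (t : T)
  : option T :=
  match a with None => Some t | Some a' => Some (mul a' t) end.

(* Hat X = X + X : inl x is the letter x, inr x is the formal inverse xbar.
   loop_path mul gen a w b : w labels a path from a to b in the loop
   automaton (edge a --x--> a(x sigma), edge a(x sigma) --xbar--> a). *)
Fixpoint loop_path {T X : Type} (mul : T -> T -> T) (gen : X -> T)
  (a : option T) (w : seq (X + X)) (b : option T) : Prop :=
  match w with
  | [::] => a = b
  | inl x :: w' => loop_path mul gen (mul1 mul a (gen x)) w' b
  | inr x :: w' => exists a', mul1 mul a' (gen x) = a /\ loop_path mul gen a' w' b
  end.

Definition loop_problem {T X : Type} (mul : T -> T -> T) (gen : X -> T)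
  (w : seq (X + X)) : Prop :=
  loop_path mul gen None w None.

Definition regular {A : finType} (L : seq A -> Prop) : Prop :=
  exists (Q : finType) (q0 : Q) (d : Q -> A -> Q) (F : pred Q),
    forall w, L w <-> F (foldl d q0 w).

Definition hat {X Y : Type} (e : X -> Y) (z : X + X) : Y + Y :=
  match z with inl x => inl (e x) | inr x => inr (e x) end.

(* There exist finite choices of generators sigma : X -> S, tau : Y -> M,
   with X identified with a subset of Y via the injection e, and a regular
   R over Hat Y with L_sigma(S) = L_tau(M) ∩ R. *)
Definition loop_problem_is_regular_restriction {S M : Type}
  (mulS : S -> S -> S) (mulM : M -> M -> M) : Prop :=
  exists (X Y : finType) (e : X -> Y) (sigma : X -> S) (tau : Y -> M)
         (R : seq (Y + Y) -> Prop),
    injective e /\ is_choice_of_generators mulS sigma /\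
    is_choice_of_generators mulM tau /\ regular R /\
    forall w : seq (Y + Y),
      (loop_problem mulM tau w /\ R w) <->
      (exists u, loop_problem mulS sigma u /\ w = map (hat e) u).

Definition is_unit {S : Type} (mul : S -> S -> S) (one : S) (g : S) : Prop :=
  exists h, mul g h = one /\ mul h g = one.

Definition rees_mul {S I J : Type} (mul : S -> S -> S) (P : J -> I -> S)
  (a b : I * S * J) : I * S * J :=
  let: (i1, g1, j1) := a in let: (i2, g2, j2) := b in
  (i1, mul (mul g1 (P j1 i2)) g2, j2).

(* Rees matrix semigroup with zero M^0(S; I, J; P); None is 0 (both as an
   element of M^0 and as an entry of P). *)
Definition rees0_mul {S I J : Type} (mul : S -> S -> S)
  (P : J -> I -> option S) (a b : option (I * S * J)) : option (I * S * J) :=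
  match a, b with
  | Some (i1, g1, j1), Some (i2, g2, j2) =>
      match P j1 i2 with
      | Some p => Some (i1, mul (mul g1 p) g2, j2)
      | None => None
      end
  | _, _ => None
  end.

(* Main.v *)
Require Import Defs.
From mathcomp Require Import all_boot.
Set Implicit Arguments. Unset Strict Implicit. Unset Printing Implicit Defensive.

Lemma loop_fwd (S M X : Type) (mulS : S -> S -> S) (mulM : M -> M -> M)
  (phi : S -> M) (phiM : forall a b, phi (mulS a b) = mulM (phi a) (phi b))
  (sigma : X -> S) :
  forall u a b, loop_path mulS sigma a u b ->
    loop_path mulM (fun x => phi (sigma x)) (omap phi a) u (omap phi b).
Proof.
have E : forall a s, mul1 mulM (omap phi a) (phi s) = omap phi (mul1 mulS a s).
  by case=> [a|] s //=; rewrite phiM.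
elim=> [|[x|x] u IH] a b /=; first by move->.
  by move/IH; rewrite E.
case=> a' [<- H]; exists (omap phi a'); split; first by rewrite E.
exact: IH.
Qed.

Lemma loop_bwd (S M X : Type) (mulS : S -> S -> S) (mulM : M -> M -> M)
  (phi : S -> M) (good : option M -> bool) (psi : option M -> option S)
  (H2 : forall a s, good (mul1 mulM a (phi s)) = good a)
  (H3 : forall a s, good a -> psi (mul1 mulM a (phi s)) = mul1 mulS (psi a) s)
  (sigma : X -> S) :
  forall u a b, loop_path mulM (fun x => phi (sigma x)) a u b -> good a ->
    loop_path mulS sigma (psi a) u (psi b).
Proof.
elim=> [|[x|x] u IH] a b /=; first by move->.
  move=> H ga; rewrite -H3 //; apply: IH => //; by rewrite H2.
case=> a' [Ea H] ga; exists (psi a').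
have ga' : good a' by rewrite -(H2 a' (sigma x)) Ea.
split; first by rewrite -H3 // Ea.
exact: IH.
Qed.

Lemma loop_map (T X Y : Type) (mul : T -> T -> T) (tau : Y -> T) (e : X -> Y) :
  forall u a b, loop_path mul tau a (map (hat e) u) b <->
                loop_path mul (fun x => tau (e x)) a u b.
Proof.
elim=> [|[x|x] u IH] a b /=; first by [].
  exact: IH.
split; case=> a' [E H]; exists a'; split => //; exact/IH.
Qed.

Lemma foldl_and (A : Type) (p : A -> bool) : forall w b,
  foldl (fun q c => q && p c) b w = b && all p w.
Proof. by elim=> [|c w IH] b /=; rewrite ?andbT // IH andbA. Qed.

Definition isX {X Z : Type} (c : (X + Z) + (X + Z)) : bool :=
  match c with inl (inl _) | inr (inl _) => true | _ => false end.

Lemma allX_map {X Z : Type} : forall w : seq ((X + Z) + (X + Z)), all isX w ->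
  exists u, w = map (hat inl) u.
Proof.
elim=> [|c w IH] /=; first by exists [::].
case/andP=> hc /IH [u ->].
by case: c hc => [[x|z]|[x|z]] //= _; [exists (inl x :: u) | exists (inr x :: u)].
Qed.

Lemma allX_hat {X Z : Type} (u : seq (X + X)) : all (@isX X Z) (map (hat inl) u).
Proof. by elim: u => [|[x|x] u IH] //=. Qed.

Lemma word_eval_inr (T X Z : Type) (mul : T -> T -> T) (f : X -> T) (g : Z -> T) z w :
  word_eval mul (fun y => match y with inl x => f x | inr z => g z end) (inr z) (map inr w)
  = word_eval mul g z w.
Proof.
rewrite /word_eval; elim: w (g z) => [|y w IH] a //=.
Qed.

Lemma main_construction (S M : Type) (mulS : S -> S -> S) (mulM : M -> M -> M)
  (X Z : finType) (sigma : X -> S) (gM : Z -> M)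
  (Hs : is_choice_of_generators mulS sigma) (Hm : is_choice_of_generators mulM gM)
  (phi : S -> M) (phiM : forall a b, phi (mulS a b) = mulM (phi a) (phi b))
  (good : option M -> bool) (psi : option M -> option S)
  (H1 : good None) (H4 : psi None = None)
  (H2 : forall a s, good (mul1 mulM a (phi s)) = good a)
  (H3 : forall a s, good a -> psi (mul1 mulM a (phi s)) = mul1 mulS (psi a) s) :
  loop_problem_is_regular_restriction mulS mulM.
Proof.
pose tau (y : X + Z) := match y with inl x => phi (sigma x) | inr z => gM z end.
exists X, (X + Z)%type, inl, sigma, tau, (fun w => all isX w).
split; first by move=> a b [].
split => //.
split.
  move=> t; have [z [w E]] := Hm t.
  by exists (inr z), (map inr w); rewrite word_eval_inr.
split.
  exists (bool : finType), true, (fun q c => q && isX c), (fun b => b) => w.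
  by rewrite foldl_and.
move=> w; split.
  case=> Hl /allX_map [u Ew]; exists u; split => //.
  move: Hl; rewrite /loop_problem Ew => /loop_map Hl.
  by have := loop_bwd H2 H3 Hl H1; rewrite H4.
case=> u [Hl ->]; split; last exact: allX_hat.
rewrite /loop_problem; apply/loop_map.
exact: (loop_fwd phiM Hl).
Qed.

Definition sig1 {S I J Z : Type} (P : J -> I -> S) (gM : Z -> I * S * J)
  (x : Z + (Z * Z)) : S :=
  match x with inl k => (gM k).1.2 | inr (k, l) => P (gM k).2 (gM l).1.1 end.

Lemma gen1_aux (S I J : Type) (mul : S -> S -> S) (P : J -> I -> S) (Z : Type)
  (gM : Z -> I * S * J) :
  forall w a k, a.2 = (gM k).2 ->
   exists v, (foldl (fun c y => rees_mul mul P c (gM y)) a w).1.2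
             = foldl (fun c x => mul c (sig1 P gM x)) a.1.2 v.
Proof.
elim=> [|y w IH] a k Ha /=; first by exists [::].
have H' : (rees_mul mul P a (gM y)).2 = (gM y).2.
  by case: a {Ha} => [[i g] j]; case: (gM y) => [[i2 g2] j2].
have [v' Hv] := IH (rees_mul mul P a (gM y)) y H'.
exists (inr (k, y) :: inl y :: v'); rewrite Hv /= -Ha; clear H' Hv.
by case: a {Ha} => [[i g] j] /=; case: (gM y) => [[i2 g2] j2].
Qed.

Lemma case1 (S : Type) (mul : S -> S -> S) (one : S)
  (mulA : forall a b c, mul a (mul b c) = mul (mul a b) c)
  (mul1s : forall a, mul one a = a) (muls1 : forall a, mul a one = a)
  (I J : Type) (P : J -> I -> S) :
      fin_generated (rees_mul mul P) ->
      (exists (j : J) (i : I), is_unit mul one (P j i)) ->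
      loop_problem_is_regular_restriction mul (rees_mul mul P).
Proof.
case=> Z [gM Hm] [j0 [i0 [q [pq qp]]]].
set p := P j0 i0 in pq qp.
have Hs : is_choice_of_generators mul (sig1 P gM).
  move=> s; have [x0 [w E]] := Hm (i0, s, j0).
  have [v Hv] := @gen1_aux _ _ _ mul P _ gM w (gM x0) x0 erefl.
  exists (inl x0), v; move: Hv; rewrite /word_eval in E; rewrite E /= => ->.
  by [].
apply: (@main_construction _ _ _ _ _ _ _ _ Hs Hm
  (fun s => (i0, mul s q, j0)) _ (fun _ => true)
  (fun a => match a with None => None | Some (i, g, j) => Some (mul g (P j i0)) end)).
- move=> a b /=; congr (_, _, _).
  by rewrite -!mulA (mulA q) qp mul1s.
- by [].
- by [].
- by [].
- move=> [[[i g] j]|] s _ /=; congr Some.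
    by rewrite -/p -!mulA qp muls1.
  by rewrite -/p -mulA qp muls1.
Qed.

Definition iof {S I J Z : Type} (i0 : I) (gM : Z -> option (I * S * J)) k :=
  match gM k with Some (i, _, _) => i | None => i0 end.
Definition jof {S I J Z : Type} (j0 : J) (gM : Z -> option (I * S * J)) k :=
  match gM k with Some (_, _, j) => j | None => j0 end.
Definition sig2 {S I J Z : Type} (one : S) (i0 : I) (j0 : J) (P : J -> I -> option S)
  (gM : Z -> option (I * S * J)) (x : Z + (Z * Z)) : S :=
  match x with
  | inl k => match gM k with Some (_, g, _) => g | None => one end
  | inr (k, l) => match P (jof j0 gM k) (iof i0 gM l) with Some p => p | None => one end
  end.

Lemma gen2_aux (S I J : Type) (mul : S -> S -> S) (one : S) (i0 : I) (j0 : J)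
  (P : J -> I -> option S) (Z : Type) (gM : Z -> option (I * S * J)) :
  forall w a k i g j,
   (forall i' g' j', a = Some (i', g', j') -> j' = jof j0 gM k) ->
   foldl (fun c y => rees0_mul mul P c (gM y)) a w = Some (i, g, j) ->
   exists i' g' j', a = Some (i', g', j') /\
     exists v, g = foldl (fun c x => mul c (sig2 one i0 j0 P gM x)) g' v.
Proof.
elim=> [|y w IH] a k i g j Ha /=.
  by move->; exists i, g, j; split => //; exists [::].
move=> Hf.
have H' : forall i' g' j', rees0_mul mul P a (gM y) = Some (i', g', j') ->
    j' = jof j0 gM y.
  move=> i' g' j'.
  case: a {Ha Hf} => [[[i1 g1] j1]|] //=; rewrite /jof;
    case: (gM y) => [[[i2 g2] j2]|] //=.
  by case: (P j1 i2) => // r [_ _ ->].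
have [i'' [g'' [j'' [E1 [v' Hv]]]]] := IH _ y i g j H' Hf.
clear H' Hf IH.
move: E1 Ha; case: a => [[[i1 g1] j1]|] //=.
case E: (gM y) => [[[i2 g2] j2]|] //=.
case Ep: (P j1 i2) => [r|] // [_ Eg _] Ha; rewrite -Eg in Hv.
exists i1, g1, j1; split => //.
exists (inr (k, y) :: inl y :: v'); rewrite Hv /= E.
by rewrite -(Ha i1 g1 j1 erefl) /iof E Ep.
Qed.

Lemma case2 (S : Type) (mul : S -> S -> S) (one : S)
  (mulA : forall a b c, mul a (mul b c) = mul (mul a b) c)
  (mul1s : forall a, mul one a = a) (muls1 : forall a, mul a one = a)
  (I J : Type) (P : J -> I -> option S) :
      fin_generated (rees0_mul mul P) ->
      (exists (j : J) (i : I) (u : S), P j i = Some u /\ is_unit mul one u) ->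
      loop_problem_is_regular_restriction mul (rees0_mul mul P).
Proof.
case=> Z [gM Hm] [j0 [i0 [p [Hp [q [pq qp]]]]]].
have Hs : is_choice_of_generators mul (sig2 one i0 j0 P gM).
  move=> s; have [x0 [w E]] := Hm (Some (i0, s, j0)).
  have Hx : forall i' g' j', gM x0 = Some (i', g', j') -> j' = jof j0 gM x0.
    by move=> i' g' j' H; rewrite /jof H.
  have [i1 [g1 [j1 [E1 [v Hv]]]]] :=
    @gen2_aux _ _ _ mul one i0 j0 P _ gM w (gM x0) x0 i0 s j0 Hx E.
  by exists (inl x0), v; rewrite Hv /word_eval /= E1.
apply: (@main_construction _ _ _ _ _ _ _ _ Hs Hm
  (fun s => Some (i0, mul s q, j0)) _
  (fun a => match a with None => true | Some None => false
            | Some (Some (i, g, j)) => P j i0 end)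
  (fun a => match a with None => None | Some None => Some one
            | Some (Some (i, g, j)) =>
               Some (match P j i0 with Some r => mul g r | None => one end) end)).
- move=> a b /=; rewrite Hp; congr (Some (_, _, _)).
  by rewrite -!mulA (mulA q) qp mul1s.
- by [].
- by [].
- move=> [[[[i g] j]|]|] s //=; last by rewrite Hp.
  by case: (P j i0) => //=; rewrite Hp.
- move=> [[[[i g] j]|]|] s //=.
    by case: (P j i0) => //= r _; rewrite Hp -!mulA qp muls1.
  by move=> _; rewrite Hp -mulA qp muls1.
Qed.

Theorem theorem5p3 (S : Type) (mul : S -> S -> S) (one : S)
  (mulA : forall a b c, mul a (mul b c) = mul (mul a b) c)
  (mul1s : forall a, mul one a = a) (muls1 : forall a, mul a one = a)
  (I J : Type) :
  (forall P : J -> I -> S,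
      fin_generated (rees_mul mul P) ->
      (exists (j : J) (i : I), is_unit mul one (P j i)) ->
      loop_problem_is_regular_restriction mul (rees_mul mul P))
  /\
  (forall P : J -> I -> option S,
      fin_generated (rees0_mul mul P) ->
      (exists (j : J) (i : I) (u : S), P j i = Some u /\ is_unit mul one u) ->
      loop_problem_is_regular_restriction mul (rees0_mul mul P)).
Proof.
split => P.
  exact: (case1 mulA mul1s muls1).
exact: (case2 mulA mul1s muls1).
Qed.
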